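(* Let $I\ge 1$ and positive integers $J_1,\dots,J_I$ be given, and set $J_0=J_{I+1}=1$. Let real weights $W_{\hat j,i,j}$ (for $i=1,\dots,I+1$, $j=1,\dots,J_i$, $\hat j=1,\dots,J_{i-1}$) and real biases $B_{i,j}$ (for $i=1,\dots,I+1$, $j=1,\dots,J_i$) be given, and assume $W_{\hat j,i,j}\ge 0$ for all indices. Let $N:\mathbb{R}\to\mathbb{R}$ be the function computed by the ReLU network with these parameters, defined in the context below. Fix $x\in\mathbb{R}$ and consider the linear program in the variables $\sigma_{i,j}$ ($i=1,\dots,I$, $j=1,\dots,J_i$) and $\theta\in\mathbb{R}$: $$\min\ \theta$$ subject to $$\sigma_{i,j}\ge 0 \quad \forall i,j,$$ $$\sigma_{1,j}\ge W_{1,1,j}\,x+B_{1,j}\quad \forall j=1,\dots,J_1,$$ $$\sigma_{i,j}\ge \sum_{\hat j=1}^{J_{i-1}} W_{\hat j,i,j}\,\sigma_{i-1,\hat j}+B_{i,j}\quad \forall i=2,\dots,I,\ j=1,\dots,J_i,$$ $$\theta=\sum_{\hat j=1}^{J_I} W_{\hat j,I+1,1}\,\sigma_{I,\hat j}+B_{I+1,1}.$$ Then this linear program is feasible and bounded below, and its optimal value equals $N(x)$. Moreover, setting each $\sigma_{i,j}$ equal to the ReLU activation $a_{i,j}(x)$ gives an optimal solution, and every feasible solution satisfies $\sigma_{i,j}\ge a_{i,j}(x)$ for all $i,j$.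
   Context: The network function $N$ is defined as follows. For input $x\in\mathbb{R}$, set $a_{1,j}(x)=\max\bigl(0,\,W_{1,1,j}x+B_{1,j}\bigr)$ for $j=1,\dots,J_1$; for $i=2,\dots,I$ and $j=1,\dots,J_i$, set $a_{i,j}(x)=\max\bigl(0,\,\sum_{\hat j=1}^{J_{i-1}}W_{\hat j,i,j}\,a_{i-1,\hat j}(x)+B_{i,j}\bigr)$; finally $N(x)=\sum_{\hat j=1}^{J_I}W_{\hat j,I+1,1}\,a_{I,\hat j}(x)+B_{I+1,1}$ (no activation is applied at the output node). Here $W_{\hat j,i,j}$ is the weight of the connection from node $\hat j$ in layer $i-1$ to node $j$ in layer $i$ (layer $0$ being the single input and layer $I+1$ the single output), and $B_{i,j}$ is the bias of node $j$ in layer $i$. *)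

(* Defs.v *)
From mathcomp Require Import all_boot all_order all_algebra.
Set Implicit Arguments. Unset Strict Implicit. Unset Printing Implicit Defensive.
Import Order.TTheory GRing.Theory Num.Theory.
Local Open Scope ring_scope.

(* Conventions: all indices are 1-based natural numbers as in the paper.
   Layer widths: J : nat -> nat gives J_1..J_I; Jw I J extends it with
   J_0 = J_{I+1} = 1.
   W hj i j = W_{hat j, i, j};  B i j = B_{i,j}. *)

Definition Jw (I : nat) (J : nat -> nat) (i : nat) : nat :=
  if i == 0%N then 1%N else if i == I.+1 then 1%N else J i.

Section Net.
Variable R : realFieldType.
Variables (I : nat) (J : nat -> nat) (W : nat -> nat -> nat -> R)
          (B : nat -> nat -> R).

Definition relu (t : R) : R := Num.max 0 t.

Fixpoint act (i : nat) (x : R) (j : nat) : R :=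
  match i with
  | 0%N => 0
  | 1%N => relu (W 1 1 j * x + B 1 j)
  | (i'.+1) as i => relu (\sum_(1 <= hj < (J i').+1) W hj i j * act i' x hj + B i j)
  end.

Definition net (x : R) : R :=
  \sum_(1 <= hj < (J I).+1) W hj I.+1 1 * act I x hj + B I.+1 1.

Definition lp_feasible (x : R) (sigma : nat -> nat -> R) (theta : R) : Prop :=
  [/\ (forall i j, (1 <= i <= I)%N -> (1 <= j <= J i)%N -> 0 <= sigma i j),
      (forall j, (1 <= j <= J 1)%N -> W 1 1 j * x + B 1 j <= sigma 1%N j),
      (forall i j, (2 <= i <= I)%N -> (1 <= j <= J i)%N ->
         \sum_(1 <= hj < (J i.-1).+1) W hj i j * sigma i.-1 hj + B i j <= sigma i j)
    & theta = \sum_(1 <= hj < (J I).+1) W hj I.+1 1 * sigma I hj + B I.+1 1].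

End Net.

(* Main.v *)
Require Import Defs.
From mathcomp Require Import all_boot all_order all_algebra.
Import Order.TTheory GRing.Theory Num.Theory.
Local Open Scope ring_scope.


Lemma relu_ge0 (R : realFieldType) (t : R) : 0 <= relu t.
Proof. by rewrite /relu le_max lexx. Qed.
Lemma relu_ge (R : realFieldType) (t : R) : t <= relu t.
Proof. by rewrite /relu le_max lexx orbT. Qed.
Lemma relu_le (R : realFieldType) (t s : R) : 0 <= s -> t <= s -> relu t <= s.
Proof. by move=> h1 h2; rewrite /relu ge_max h1 h2. Qed.
Lemma act_ge0 (R : realFieldType) J (W : nat -> nat -> nat -> R) B i x j :
  0 <= act J W B i x j.
Proof. case: i => [|[|n]] /=; [exact: lexx|exact: relu_ge0|exact: relu_ge0]. Qed.

Theorem mainTheorem1 (R : realFieldType) (I : nat) (J : nat -> nat)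
    (W : nat -> nat -> nat -> R) (B : nat -> nat -> R) (x : R) :
  (1 <= I)%N ->
  (forall i, (1 <= i <= I)%N -> (0 < J i)%N) ->
  (forall hj i j, (1 <= i <= I.+1)%N -> (1 <= j <= Jw I J i)%N ->
     (1 <= hj <= Jw I J i.-1)%N -> 0 <= W hj i j) ->
  [/\ (* feasible *)
      exists sigma theta, lp_feasible I J W B x sigma theta,
      (* bounded below, with lower bound N(x) *)
      (forall sigma theta, lp_feasible I J W B x sigma theta -> net I J W B x <= theta),
      (* sigma = activations is feasible and attains N(x), hence optimal;
         so the optimal value equals N(x) *)
      lp_feasible I J W B x (fun i j => act J W B i x j) (net I J W B x)
    & (* every feasible solution dominates the activations *)
      (forall sigma theta, lp_feasible I J W B x sigma theta ->
         forall i j, (1 <= i <= I)%N -> (1 <= j <= J i)%N ->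
           act J W B i x j <= sigma i j)].
Proof.
move=> HI HJ HW.
have key : forall sigma theta, lp_feasible I J W B x sigma theta ->
    forall i j, (1 <= i <= I)%N -> (1 <= j <= J i)%N ->
      act J W B i x j <= sigma i j.
  move=> sigma theta [H0 H1 H2 H3].
  elim=> [|[|n] IH] j //.
  - move=> Hi Hj /=; apply: relu_le; first exact: H0.
    exact: H1.
  - move=> /andP[_ Hi] Hj /=; apply: relu_le; first by apply: H0 => //.
    apply: le_trans (H2 n.+2 j _ Hj); last by rewrite Hi.
    rewrite lerD2r; apply: ler_sum_nat => hj /andP[h1 h2].
    have hjJ : (hj <= J n.+1)%N by rewrite -ltnS.
    apply: ler_wpM2l.
      apply: HW; rewrite ?h1 ?hjJ //=.
      + by rewrite ltnS ltnW.
      + rewrite /Jw /=; have -> : (n.+2 == I.+1) = false.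
          by apply/negbTE; rewrite eqSS; apply/eqP => E; move: Hi; rewrite E ltnn.
        done.
      + rewrite /Jw /=; have -> : (n.+1 == I.+1) = false.
          by apply/negbTE; rewrite eqSS; apply/eqP => E; move: Hi; rewrite -E ltnNge leqnSn.
        done.
    apply: IH; first by rewrite /= (ltnW Hi).
    by rewrite h1 hjJ.
have feas : lp_feasible I J W B x (fun i j => act J W B i x j) (net I J W B x).
  split => //.
  - by move=> i j _ _; exact: act_ge0.
  - by move=> j _ /=; exact: relu_ge.
  - move=> i j /andP[Hi _] _; case: i Hi => [|[|n]] // _ /=; exact: relu_ge.
split => //.
- by exists (fun i j => act J W B i x j), (net I J W B x).
- move=> sigma theta F; have K := key _ _ F.
  case: F => _ _ _ ->; rewrite /net lerD2r; apply: ler_sum_nat => hj /andP[h1 h2].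
  have hjJ : (hj <= J I)%N by rewrite -ltnS.
  apply: ler_wpM2l; last by apply: K; rewrite ?HI ?leqnn ?h1 ?hjJ.
  apply: HW.
  + by rewrite //= ?ltnSn ?leqnn.
  + by rewrite /Jw /= eqxx.
  + rewrite /Jw /=; have -> : (I == 0%N) = false by apply/negbTE; rewrite -lt0n.
    have -> : (I == I.+1) = false by apply/negbTE; rewrite neq_ltn ltnSn.
    by rewrite h1 hjJ.
Qed.
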